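(* Let $x$ be a positive integer. Then both $6x-1$ and $6x+1$ are prime if and only if there is no prime $p \geq 5$ with $p < 6x-1$ such that $x \equiv -\kappa(p) \pmod{p}$ or $x \equiv +\kappa(p) \pmod{p}$.
   Context: For a prime $p \geq 5$ define $\kappa(p) = \frac{p+1}{6}$ if $p \equiv -1 \pmod 6$ and $\kappa(p) = \frac{p-1}{6}$ if $p \equiv +1 \pmod 6$ (so $p = 6\kappa(p) \mp 1$ is an integer of the form $6k\pm 1$ with $k=\kappa(p)$). *)

(* Defs.v *)
From mathcomp Require Import all_boot all_order all_algebra.
Set Implicit Arguments. Unset Strict Implicit. Unset Printing Implicit Defensive.

(* kappa p = (p+1)/6 if p = -1 mod 6, (p-1)/6 if p = +1 mod 6.
   For primes p >= 5 exactly one of these cases holds; for other p the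
   value is irrelevant (the statement only uses kappa at primes p >= 5). *)
Definition kappa (p : nat) : nat :=
  if p %% 6 == 5 then (p + 1) %/ 6 else (p - 1) %/ 6.

(* Main.v *)
Require Import Defs.
From mathcomp Require Import all_boot all_order all_algebra.
From mathcomp Require Import zify.
Import GRing.Theory.

Lemma modE (d a b : int) : (a = b %[mod d])%Z <-> (d %| (a - b)%R)%Z.
Proof. rewrite -eqz_mod_dvd; split => [->|/eqP] //. Qed.

Lemma mul6 (p : nat) : prime p -> (5 <= p)%N -> forall (a : int),
  (p%:Z %| a)%Z = (p%:Z %| (6 * a)%R)%Z.
Proof.
move=> Hp H5 a; rewrite Gauss_dvdzr //.
rewrite coprimezE /= prime_coprime //; apply/negP => hd.
have h : (p <= 6)%N := dvdn_leq (isT : (0 < 6)%N) hd.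
have : p = 5 \/ p = 6 by lia.
by case=> E; move: Hp hd; rewrite E.
Qed.

Lemma p6 p : prime p -> (5 <= p)%N -> p %% 6 = 1 \/ p %% 6 = 5.
Proof.
case/primeP => _ H H5.
have h2 : ~~ (2 %| p) by apply/negP => /H; case/orP => /eqP; lia.
have h3 : ~~ (3 %| p) by apply/negP => /H; case/orP => /eqP; lia.
lia.
Qed.

Lemma key x p : (0 < x)%N -> prime p -> (5 <= p)%N ->
  ((x%:Z = - (kappa p)%:Z %[mod p%:Z])%Z \/ (x%:Z = (kappa p)%:Z %[mod p%:Z])%Z)
  <-> (p %| 6 * x - 1 \/ p %| 6 * x + 1).
Proof.
move=> hx Hp H5; rewrite !modE (mul6 p Hp H5 (x%:Z - - (kappa p)%:Z)%R) (mul6 p Hp H5 (x%:Z - (kappa p)%:Z)%R) opprK.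
have hdp : (p%:Z %| p%:Z)%Z by apply: dvdzz.
rewrite /kappa; case: (p6 p Hp H5) => hm.
- rewrite hm /=.
  set k := (p - 1) %/ 6.
  have e1 : (6 * (x%:Z + k%:Z) = ((6*x-1)%N)%:Z + p%:Z)%R by rewrite /k; lia.
  have e2 : (6 * (x%:Z - k%:Z) = ((6*x+1)%N)%:Z - p%:Z)%R by rewrite /k; lia.
  rewrite e1 e2 rpredDr // rpredBr //.
- rewrite hm /=.
  set k := (p + 1) %/ 6.
  have e1 : (6 * (x%:Z + k%:Z) = ((6*x+1)%N)%:Z + p%:Z)%R by rewrite /k; lia.
  have e2 : (6 * (x%:Z - k%:Z) = ((6*x-1)%N)%:Z - p%:Z)%R by rewrite /k; lia.
  rewrite e1 e2 rpredDr // rpredBr //.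
  by split; case=> h; [right|left|right|left]; exact h.
Qed.

Lemma small_factor n : (2 <= n)%N -> ~~ prime n -> ~~ (2 %| n) -> ~~ (3 %| n) ->
  exists q, [/\ prime q, (5 <= q)%N, q %| n & (2 * q <= n)%N].
Proof.
move=> h2 /primePn [|[d /andP [hd1 hdn] hdd]]; first lia.
move=> n2 n3.
have dpos : (0 < d)%N by lia.
have qd : pdiv d %| d by apply: pdiv_dvd.
have qp : prime (pdiv d) by apply: pdiv_prime.
have qn : pdiv d %| n by apply: dvdn_trans qd hdd.
have qle : (pdiv d <= d)%N by apply: dvdn_leq.
have d2 : (2 * d <= n)%N.
  have E := divnK hdd.
  set c := n %/ d in E.
  have c0 : c <> 0 by move=> c0; rewrite c0 in E; lia.
  have c1 : c <> 1 by move=> c1; rewrite c1 in E; lia.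
  nia.
exists (pdiv d); split => //; last by lia.
have q2 : (2 <= pdiv d)%N by apply: prime_gt1.
have : pdiv d <> 2 by move=> E; rewrite E in qn; rewrite qn in n2.
have : pdiv d <> 3 by move=> E; rewrite E in qn; rewrite qn in n3.
have : pdiv d <> 4 by move=> E; rewrite E in qp.
lia.
Qed.

Theorem theorem1 (x : nat) (hx : 0 < x) :
  (prime (6 * x - 1) /\ prime (6 * x + 1)) <->
  ~ (exists p : nat,
       [/\ prime p, 5 <= p, p < 6 * x - 1 &
        ((x%:Z = - (kappa p)%:Z %[mod p%:Z])%Z \/
         (x%:Z = (kappa p)%:Z %[mod p%:Z])%Z)]).
Proof.
split.
- case=> P1 P2 [p [Hp H5 Hlt Hm]].
  case: ((key x p hx Hp H5).1 Hm) => hd.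
  + case/primeP: P1 => _ /(_ p hd) /orP [] /eqP; lia.
  + case/primeP: P2 => _ /(_ p hd) /orP [] /eqP; lia.
- move=> H.
  have F : forall n, (n = 6 * x - 1 \/ n = 6 * x + 1) -> prime n.
    move=> n hn; apply/negPn/negP => np.
    have [q [qp q5 qn q2]] : exists q, [/\ prime q, (5 <= q)%N, q %| n & (2 * q <= n)%N].
      apply: small_factor => //; lia.
    apply: H; exists q; split => //; first lia.
    by apply/(key x q hx qp q5); case: hn => E; rewrite E in qn; [left|right].
  by split; apply: F; [left|right].
Qed.
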